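(* Let $G$ be a finite group and $H$ a normal subgroup of $G$ such that $G/H$ is cyclic of order $n$. For each divisor $d$ of $n$, let $K_d$ be the unique subgroup of $G$ containing $H$ with $|K_d:H|=d$, let $\Gamma_d$ be a coset of $H$ whose order in $G/H$ is $d$, let $T_d$ be the number of $G$-conjugacy classes contained in $\Gamma_d$, let $S_d$ be the number of $G$-conjugacy classes contained in $K_d$, and let $S^*_d$ be the number of conjugacy classes of the group $K_d$ (under its own conjugation action). Then for every divisor $d$ of $n$: (1) $\displaystyle S^*_d=n\sum_{c\mid n}\sum_{a\mid c}\mu(c/a)\frac{\gcd(a,d)}{\operatorname{lcm}(a,d)}T_c$; (2) $\displaystyle S^*_d=n\sum_{c\mid n}\sum_{a\mid c}\sum_{b\mid c}\frac{\mu(c/a)\mu(c/b)}{\phi(c)}\frac{\gcd(a,d)}{\operatorname{lcm}(a,d)}S_b$, where $\mu$ is the Möbius function and $\phi$ is Euler's totient function.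
   Context: $T_d$ does not depend on the choice of the coset $\Gamma_d$ of order $d$ in $G/H$. All sums are over positive divisors. *)

(* Defs.v *)
From mathcomp Require Import all_boot all_order all_algebra all_fingroup all_solvable.
Set Implicit Arguments. Unset Strict Implicit. Unset Printing Implicit Defensive.
Import GRing.Theory Num.Theory.

(* Moebius function on positive integers (mu 0 := 0 by convention; unused):
   mu n = (-1)^k if n is a product of k distinct primes, 0 otherwise. *)
Definition moebius (n : nat) : int :=
  if n == 0%N then 0%R
  else if all (fun p => logn p n == 1%N) (primes n)
       then ((-1) ^+ size (primes n))%R
       else 0%R.

Definition nclasses_in (gT : finGroupType) (G : {set gT}) (A : {set gT}) : nat :=
  #|[set C in classes G | C \subset A]|.

(* Main.v *)
Require Import Defs.
From mathcomp Require Import all_boot all_order all_algebra all_fingroup all_solvable.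
From mathcomp Require Import zify ring lra.
Import GRing.Theory Num.Theory.
Set Implicit Arguments. Unset Strict Implicit. Unset Printing Implicit Defensive.


Lemma sum_divisors (F : nat -> rat) m N : (0 < m)%N -> (m < N)%N ->
  (\sum_(d <- divisors m) F d)%R = (\sum_(d < N | (d %| m)%N) F d)%R.
Proof.
move=> m0 mN; rewrite -(big_mkord (fun d => d %| m)%N F) -big_filter /index_iota subn0.
apply: perm_big; apply: uniq_perm; first exact: divisors_uniq.
  by rewrite filter_uniq // iota_uniq.
move=> d; rewrite mem_filter mem_iota add0n -dvdn_divisors //.
case dm: (d %| m) => //=; apply/esym; apply: leq_ltn_trans mN.
exact: dvdn_leq.
Qed.

Lemma sum_mul_reindex (F : nat -> rat) a m N : (0 < m)%N -> (m < N)%N -> (a %| m)%N ->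
  (\sum_(c < N | ((a %| c)%N) && ((c %| m)%N)) F c)%R = (\sum_(s < N | (s %| m %/ a)%N) F (a * s)%N)%R.
Proof.
move=> m0 mN am.
have a0 : (0 < a)%N by case: a am => //; rewrite dvd0n => /eqP h; rewrite h in m0.
rewrite -(big_mkord (fun c => (a %| c) && (c %| m))%N F) -(big_mkord (fun s => s %| m %/ a)%N (fun s => F (a*s)%N)) -big_filter; symmetry; rewrite -big_filter /index_iota subn0 -(big_map (muln a) xpredT F); symmetry.
apply: perm_big; apply: uniq_perm.
- by rewrite filter_uniq // iota_uniq.
- rewrite map_inj_uniq ?filter_uniq ?iota_uniq //.
  by move=> x y /eqP; rewrite eqn_pmul2l // => /eqP.
move=> c; rewrite mem_filter mem_iota add0n.
apply/idP/mapP.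
  case/andP=> /andP[/dvdnP[s ->] sm] _; exists s; last by rewrite mulnC.
  rewrite mem_filter mem_iota add0n.
  have sdiv : s %| m %/ a.
    by rewrite -(dvdn_pmul2l a0) [(a * (m %/ a))%N]mulnC divnK // mulnC.
  rewrite sdiv /=; apply: leq_ltn_trans mN.
  apply: dvdn_leq m0 _; apply: dvdn_trans sm; by rewrite dvdn_mulr.
case=> s; rewrite mem_filter mem_iota add0n => /andP[sd _] ->.
have asm : (a * s)%N %| m by rewrite -(divnK am) mulnC dvdn_pmul2r //.
rewrite dvdn_mulr //= asm /=; apply: leq_ltn_trans mN; exact: dvdn_leq.
Qed.

Lemma sum_reflect (F : nat -> rat) M N : (0 < M)%N -> (M < N)%N ->
  (\sum_(s < N | (s %| M)%N) F (M %/ s)%N)%R = (\sum_(s < N | (s %| M)%N) F s)%R.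
Proof.
move=> M0 MN; rewrite -(big_mkord (fun s => s %| M)%N (fun s => F (M %/ s)%N)) -(big_mkord (fun s => s %| M)%N F) -big_filter; symmetry; rewrite -big_filter /index_iota subn0; symmetry.
rewrite -(big_map (fun s => M %/ s)%N xpredT F).
have divK s : s %| M -> (M %/ (M %/ s))%N = s.
  by move=> sM; rewrite divnA // mulKn.
apply: perm_big; apply: uniq_perm.
- rewrite map_inj_in_uniq ?filter_uniq ?iota_uniq //.
  move=> x y; rewrite !mem_filter => /andP[xM _] /andP[yM _] e.
  by rewrite -(divK x xM) e divK.
- by rewrite filter_uniq // iota_uniq.
move=> c; apply/mapP/idP.
  case=> s; rewrite !mem_filter !mem_iota add0n => /andP[sM _] ->.
  rewrite dvdn_div //=; apply: leq_ltn_trans MN; exact: leq_div.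
rewrite mem_filter mem_iota add0n => /andP[cM cN]; exists (M %/ c)%N; last by rewrite divK.
rewrite mem_filter mem_iota add0n dvdn_div //=; apply: leq_ltn_trans MN; exact: leq_div.
Qed.


Lemma moebius1 : moebius 1 = 1%R.
Proof. by []. Qed.

Lemma primes_pmul p s : prime p -> 0 < s -> ~~ (p %| s) ->
  perm_eq (primes (p * s)) (p :: primes s).
Proof.
move=> pp s0 nps; have p0 := prime_gt0 pp.
apply: uniq_perm; first exact: primes_uniq.
  by rewrite /= primes_uniq mem_primes pp s0 /= nps.
by move=> q; rewrite primesM // primes_prime // !inE.
Qed.

Lemma moebius_pmul p s : prime p -> 0 < s -> ~~ (p %| s) ->
  moebius (p * s) = (- moebius s)%R.
Proof.
move=> pp s0 nps; have p0 := prime_gt0 pp.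
have ps := primes_pmul pp s0 nps.
rewrite /moebius muln_eq0 (negbTE (lt0n_neq0 p0)) (negbTE (lt0n_neq0 s0)) /=.
rewrite (perm_all _ ps) (perm_size ps) /=.
have -> : logn p (p * s) == 1.
  by rewrite lognM // logn_prime // eqxx add1n -[1]/(0.+1) eqSS -leqn0 leqNgt logn_gt0 mem_primes pp s0 nps.
rewrite /=.
have -> : all (fun q => logn q (p * s) == 1) (primes s) = all (fun q => logn q s == 1) (primes s).
  apply: eq_in_all => q qs; rewrite lognM // logn_prime //.
  have -> : (q == p) = false.
    by apply/negbTE; apply: contraNneq nps => <-; move: qs; rewrite mem_primes => /and3P[].
  by rewrite add0n.
by case: ifP => _; rewrite ?oppr0 // exprS mulN1r.
Qed.

Lemma moebius_pmul0 p s : prime p -> 0 < s -> p %| s -> moebius (p * s) = 0%R.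
Proof.
move=> pp s0 ps; have p0 := prime_gt0 pp.
rewrite /moebius muln_eq0 (negbTE (lt0n_neq0 p0)) (negbTE (lt0n_neq0 s0)) /=.
case: ifP => // /allP /(_ p).
rewrite mem_primes pp muln_gt0 p0 s0 dvdn_mulr //= => /(_ isT).
rewrite lognM // logn_prime // eqxx add1n -[1]/(0.+1) eqSS.
by rewrite -leqn0 leqNgt logn_gt0 mem_primes pp s0 ps.
Qed.


Lemma moebius_sum M N : 0 < M -> M < N ->
  (\sum_(s < N | (s %| M)%N) ((moebius s)%:~R : rat))%R = ((M == 1)%:R)%R.
Proof.
move=> M0 MN.
have [M1|M1] := eqVneq M 1.
  subst M; rewrite (bigD1 (Ordinal MN)) //= big1 ?addr0 //.
  move=> i /andP[i1 ine]; exfalso; move: i1; rewrite dvdn1 => /eqP i1.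
  by apply: (negP ine); apply/eqP/val_inj.
have M1' : 1 < M by lia.
set p := pdiv M; have pp : prime p := pdiv_prime M1'; have pM : p %| M := pdiv_dvd M.
have Mp0 : 0 < M %/ p by rewrite divn_gt0 ?prime_gt0 // dvdn_leq.
rewrite (bigID (fun s : 'I_N => p %| s)) /=.
have e1 : (\sum_(s < N | (s %| M)%N && (p %| s)%N) ((moebius s)%:~R : rat))%R =
   (\sum_(t < N | (t %| M %/ p)%N) (if (p %| t)%N then 0 else - (moebius t)%:~R : rat))%R.
  rewrite (eq_bigl (fun s : 'I_N => (p %| s) && (s %| M))); last by move=> s; rewrite andbC.
  rewrite (sum_mul_reindex (fun c => ((moebius c)%:~R : rat)) M0 MN pM).
  apply: eq_bigr => t tM.
  have t0 : 0 < t by case: (nat_of_ord t) tM => //; rewrite dvd0n => /eqP h; rewrite h in Mp0.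
  case: ifP => pt; first by rewrite moebius_pmul0.
  by rewrite moebius_pmul ?pt // intrN.
have e2 : (\sum_(s < N | (s %| M)%N && ~~ (p %| s)%N) ((moebius s)%:~R : rat))%R =
   (\sum_(s < N | (s %| M %/ p)%N && ~~ (p %| s)%N) ((moebius s)%:~R : rat))%R.
  apply: eq_bigl => s; case ps: (p %| s); rewrite ?andbF ?andbT //.
  by rewrite -{1}(divnK pM) mulnC Gauss_dvdr // coprime_sym prime_coprime // ps.
rewrite e1 e2 (bigID (fun t : 'I_N => p %| t)) /= big1 => [|t /andP[_ ->]] //.
rewrite add0r (eq_bigr (fun t : 'I_N => - ((moebius t)%:~R : rat))%R) => [|t /andP[_ /negbTE ->]] //.
by rewrite sumrN addNr.
Qed.


Lemma pos_of_dvd a m : 0 < m -> a %| m -> 0 < a.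
Proof. by case: a => //; rewrite dvd0n => m0 /eqP h; rewrite h in m0. Qed.

Lemma div_eq1 a m : 0 < m -> a %| m -> (m %/ a == 1) = (a == m).
Proof.
move=> m0 am; have a0 := pos_of_dvd m0 am.
apply/eqP/eqP => [h|->]; last by rewrite divnn m0.
by rewrite -(divnK am) h mul1n.
Qed.

Lemma inner1 a m N : 0 < m -> m < N -> a %| m ->
  (\sum_(c < N | (c %| m)%N && (a %| c)%N) ((moebius (c %/ a)%N)%:~R : rat))%R = ((a == m)%:R)%R.
Proof.
move=> m0 mN am; have a0 := pos_of_dvd m0 am.
rewrite (eq_bigl (fun c : 'I_N => (a %| c) && (c %| m))); last by move=> c; rewrite andbC.
rewrite (sum_mul_reindex (fun c => ((moebius (c %/ a)%N)%:~R : rat)) m0 mN am).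
rewrite (eq_bigr (fun s : 'I_N => ((moebius s)%:~R : rat))); last by move=> s _; rewrite mulKn.
rewrite moebius_sum ?div_eq1 //; first by rewrite divn_gt0 // dvdn_leq.
by apply: leq_ltn_trans mN; exact: leq_div.
Qed.

Lemma inner2 e c N : 0 < c -> c < N -> e %| c ->
  (\sum_(b < N | (b %| c)%N && (e %| b)%N) ((moebius (c %/ b)%N)%:~R : rat))%R = ((e == c)%:R)%R.
Proof.
move=> c0 cN ec; have e0 := pos_of_dvd c0 ec.
have ce0 : 0 < c %/ e by rewrite divn_gt0 // dvdn_leq.
have ceN : c %/ e < N by apply: leq_ltn_trans cN; exact: leq_div.
rewrite (eq_bigl (fun b : 'I_N => (e %| b) && (b %| c))); last by move=> b; rewrite andbC.
rewrite (sum_mul_reindex (fun b => ((moebius (c %/ b)%N)%:~R : rat)) c0 cN ec).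
rewrite (eq_bigr (fun s : 'I_N => ((moebius (c %/ e %/ s)%N)%:~R : rat))); last by move=> s _; rewrite divnMA.
rewrite (sum_reflect (fun s => ((moebius s)%:~R : rat)) ce0 ceN).
by rewrite moebius_sum ?div_eq1.
Qed.

Lemma mobius_inv1 (g : nat -> rat) m N : 0 < m -> m < N ->
  (\sum_(c < N | (c %| m)%N) \sum_(a < N | (a %| c)%N) (moebius (c %/ a)%N)%:~R * g a)%R = g m.
Proof.
move=> m0 mN.
rewrite (exchange_big_dep (fun a : 'I_N => (a %| m)%N)) /= => [|c a cm ac]; last exact: dvdn_trans ac cm.
rewrite (eq_bigr (fun a : 'I_N => ((nat_of_ord a == m)%:R * g a)%R)); last first.
  by move=> a am; rewrite -big_distrl /= inner1.
rewrite (bigD1 (Ordinal mN)) ?dvdnn //= eqxx mul1r big1 ?addr0 //.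
move=> a /andP[_ ane]; have -> : (nat_of_ord a == m) = false; last by rewrite mul0r.
by apply/negbTE; apply: contra ane => /eqP h; apply/eqP/val_inj.
Qed.

Lemma mobius_inv2 (Y : nat -> rat) c N : 0 < c -> c < N ->
  (\sum_(b < N | (b %| c)%N) (moebius (c %/ b)%N)%:~R * \sum_(e < N | (e %| b)%N) Y e)%R = Y c.
Proof.
move=> c0 cN.
rewrite (eq_bigr (fun b : 'I_N => \sum_(e < N | (e %| b)%N) ((moebius (c %/ b)%N)%:~R * Y e))%R); last first.
  by move=> b _; rewrite big_distrr.
rewrite (exchange_big_dep (fun e : 'I_N => (e %| c)%N)) /= => [|b e bc eb]; last exact: dvdn_trans eb bc.
rewrite (eq_bigr (fun e : 'I_N => ((nat_of_ord e == c)%:R * Y e)%R)); last first.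
  by move=> e ec; rewrite -big_distrl /= inner2.
rewrite (bigD1 (Ordinal cN)) ?dvdnn //= eqxx mul1r big1 ?addr0 //.
move=> a /andP[_ ane]; have -> : (nat_of_ord a == c) = false; last by rewrite mul0r.
by apply/negbTE; apply: contra ane => /eqP h; apply/eqP/val_inj.
Qed.


Lemma cnt_dvd n q : q %| n -> \sum_(i < n) (q %| i) = n %/ q.
Proof.
move=> qn; rewrite divn_count_dvd -(big_mkord xpredT (fun i => nat_of_bool (q %| i))).
case: n qn => [|n] qn; first by rewrite big_mkord big_ord0. 
by rewrite big_ltn // dvdn0 [RHS]big_nat_recr // qn addnC.
Qed.

Lemma cnt_lcm n m f : m %| n -> f %| n ->
  \sum_(i < n) ((m %| i) && (f %| i)) = n %/ lcmn m f.
Proof.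
move=> mn fn; rewrite -cnt_dvd ?dvdn_lcm ?mn ?fn //.
by apply: eq_bigr => i _; rewrite dvdn_lcm.
Qed.

Lemma cnt_eq n k f : k < n -> \sum_(i < n) ((nat_of_ord i == k) && (f %| i)) = (f %| k).
Proof.
move=> kn; rewrite (bigD1 (Ordinal kn)) //= eqxx big1 ?addn0 // => i ine.
case: eqP => // ik; case/eqP: ine; exact: val_inj.
Qed.

Lemma gcd_lcm_id n d f : 0 < n -> d %| n -> f %| n -> n %/ lcmn (n %/ d) f = gcdn d (n %/ f).
Proof.
move=> n0 dn fn.
have d0 : 0 < d by case: d dn => //; rewrite dvd0n => /eqP h; rewrite h in n0.
have f0 : 0 < f by case: f fn => //; rewrite dvd0n => /eqP h; rewrite h in n0.
have e1 : lcmn (n %/ d) f * d = lcmn n (f * d) by rewrite muln_lcml divnK.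
have e2 : gcdn d (n %/ f) * f = gcdn (d * f) n by rewrite muln_gcdl divnK.
have e3 : lcmn (n %/ d) f * gcdn d (n %/ f) = n.
  have df0 : 0 < d * f by rewrite muln_gt0 d0 f0.
  apply/eqP; rewrite -(eqn_pmul2r df0).
  have -> : lcmn (n %/ d) f * gcdn d (n %/ f) * (d * f) = (lcmn (n %/ d) f * d) * (gcdn d (n %/ f) * f) by ring.
  by rewrite e1 e2 [(f * d)%N]mulnC [gcdn (d * f) n]gcdnC muln_lcm_gcd.
have l0 : 0 < lcmn (n %/ d) f by rewrite lcmn_gt0 f0 andbT divn_gt0 // dvdn_leq.
by rewrite -{1}e3 mulKn.
Qed.

Lemma sum_prod2 m (c : rat) (a b : 'I_m -> rat) :
  (\sum_(i < m) \sum_(j < m) c * a i * b j = c * (\sum_(i < m) a i) * (\sum_(j < m) b j))%R.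
Proof.
rewrite -mulrA mulr_suml mulr_sumr; apply: eq_bigr => i _.
by rewrite !mulr_sumr; apply: eq_bigr => j _; rewrite mulrA.
Qed.

Section Expand.
Variables (n : nat) (E : nat -> nat).
Hypothesis n0 : 0 < n.

Definition Eh (f : nat) : rat :=
  (\sum_(e < n.+1 | (e %| f)%N) (moebius (f %/ e)%N)%:~R * (E e)%:R)%R.

Lemma E_expand k : k %| n ->
  ((E k)%:R = \sum_(f < n.+1 | (f %| n)%N) (f %| k)%:R * Eh f :> rat)%R.
Proof.
move=> kn; have k0 := pos_of_dvd n0 kn.
have kN : k < n.+1 by rewrite ltnS dvdn_leq.
rewrite -(mobius_inv1 (fun a => ((E a)%:R : rat)) k0 kN).
rewrite [RHS](bigID (fun f : 'I_n.+1 => f %| k)) /=.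
rewrite [X in _ = (_ + X)%R]big1 ?addr0; last by move=> f /andP[_ /negbTE ->]; rewrite mul0r.
rewrite [RHS](eq_bigr (fun f : 'I_n.+1 => Eh f)); last by move=> f /andP[_ ->]; rewrite mul1r.
apply: eq_bigl => f; case fk: (f %| k); rewrite ?andbT ?andbF //.
by rewrite (dvdn_trans fk kn).
Qed.

Lemma PS_expand (P R : nat -> bool) :
  ((\sum_(i < n) \sum_(j < n) (P i && R j) * E (gcdn (gcdn i j) n))%:R : rat)%R =
  (\sum_(f < n.+1 | (f %| n)%N) Eh f * (\sum_(i < n) (P i && (f %| i)%N))%:R
                                  * (\sum_(j < n) (R j && (f %| j)%N))%:R)%R.
Proof.
transitivity (\sum_(i < n) \sum_(j < n) \sum_(f < n.+1 | (f %| n)%N)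
   (Eh f * (P i && (f %| i)%N)%:R * (R j && (f %| j)%N)%:R))%R.
  rewrite natr_sum; apply: eq_bigr => i _; rewrite natr_sum; apply: eq_bigr => j _.
  rewrite natrM E_expand ?dvdn_gcdr // big_distrr; apply: eq_bigr => f fn /=.
  rewrite !dvdn_gcd fn andbT.
  by case: (P i); case: (R j); case: (f %| i); case: (f %| j);
     rewrite /= ?mul0r ?mulr0 ?mul1r ?mulr1.
transitivity (\sum_(i < n) \sum_(f < n.+1 | (f %| n)%N) \sum_(j < n)
   (Eh f * (P i && (f %| i)%N)%:R * (R j && (f %| j)%N)%:R))%R.
  by apply: eq_bigr => i _; rewrite exchange_big.
rewrite exchange_big /=; apply: eq_bigr => f _.
by rewrite !natr_sum sum_prod2.
Qed.

End Expand.


Lemma gd_term m d : 0 < m -> 0 < d ->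
  (m%:R * ((gcdn m d)%:R / (lcmn m d)%:R) = (gcdn d m ^ 2)%:R / d%:R :> rat)%R.
Proof.
move=> m0 d0.
have g0 : ((gcdn m d)%:R != 0 :> rat)%R by rewrite pnatr_eq0 -lt0n gcdn_gt0 m0.
have l0 : ((lcmn m d)%:R != 0 :> rat)%R by rewrite pnatr_eq0 -lt0n lcmn_gt0 m0 d0.
have dd0 : (d%:R != 0 :> rat)%R by rewrite pnatr_eq0 -lt0n.
have e : ((lcmn m d)%:R * (gcdn m d)%:R = m%:R * d%:R :> rat)%R by rewrite -!natrM muln_lcm_gcd.
have m00 : (m%:R != 0 :> rat)%R by rewrite pnatr_eq0 -lt0n.
have el : (((lcmn m d)%:R : rat) = m%:R * d%:R / (gcdn m d)%:R)%R by rewrite -e mulfK.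
rewrite gcdnC natrX el [gcdn d m]gcdnC.
by field; rewrite ?g0 ?m00 ?dd0.
Qed.

Lemma tot_gcd b M N : 0 < b -> b < N -> 0 < M ->
  (\sum_(e < N | (e %| b)%N) ((totient e * (e %| M))%:R : rat))%R = ((gcdn b M)%:R)%R.
Proof.
move=> b0 bN M0.
have g0 : 0 < gcdn b M by rewrite gcdn_gt0 b0.
have gN : gcdn b M < N by apply: leq_ltn_trans bN; apply: dvdn_leq; rewrite ?dvdn_gcdl.
transitivity (\sum_(e < N | (e %| gcdn b M)%N) ((totient e)%:R : rat))%R.
  rewrite (bigID (fun e : 'I_N => e %| M)) /= [X in (_ + X)%R]big1 ?addr0.
    by apply: eq_big => [e|e /andP[_ ->]]; rewrite ?dvdn_gcd ?muln1.
  by move=> e /andP[_ /negbTE ->]; rewrite muln0.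
rewrite -(sum_divisors (fun e => ((totient e)%:R : rat)) g0 gN).
rewrite (sum_divisors (fun e => ((totient e)%:R : rat)) g0 (ltnSn _)).
by rewrite -natr_sum sum_totient_dvd.
Qed.

Lemma inner_T (g : nat -> rat) n f : 0 < n -> f %| n ->
  (\sum_(c < n.+1 | (c %| n)%N) (((c %| n %/ f) * (n %/ f))%N)%:R *
      \sum_(a < n.+1 | (a %| c)%N) (moebius (c %/ a)%N)%:~R * g a)%R
  = (((n %/ f)%N)%:R * g (n %/ f)%N)%R.
Proof.
move=> n0 fn; have f0 := pos_of_dvd n0 fn.
have m0 : 0 < n %/ f by rewrite divn_gt0 // dvdn_leq.
have mN : n %/ f < n.+1 by rewrite ltnS leq_div.
rewrite (bigID (fun c : 'I_n.+1 => c %| n %/ f)) /= [X in (_ + X)%R]big1 ?addr0; last first.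
  by move=> c /andP[_ /negbTE ->]; rewrite mul0n mul0r.
rewrite -(mobius_inv1 g m0 mN) big_distrr /=.
apply: eq_big => [c|c /andP[_ ->]]; last by rewrite mul1n.
case cm: (c %| n %/ f); rewrite ?andbF ?andbT //.
by apply: dvdn_trans cm _; apply: dvdn_div.
Qed.

Lemma inner_S n c M : 0 < n -> c %| n -> 0 < M ->
  (\sum_(b < n.+1 | (b %| c)%N) (moebius (c %/ b)%N)%:~R * ((gcdn b M)%:R : rat))%R
  = (((totient c * (c %| M))%N)%:R)%R.
Proof.
move=> n0 cn M0; have c0 := pos_of_dvd n0 cn.
have cN : c < n.+1 by rewrite ltnS dvdn_leq.
rewrite -(mobius_inv2 (fun e => (((totient e * (e %| M))%N)%:R : rat)%R) c0 cN).
apply: eq_bigr => b bc.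
have b0 := pos_of_dvd c0 bc.
have bN : b < n.+1 by apply: leq_ltn_trans cN; apply: dvdn_leq.
by rewrite tot_gcd.
Qed.

Section Main.
Variables (n : nat) (E : nat -> nat) (h : rat) (Tv Sv Ssv : nat -> rat).
Hypotheses (n0 : 0 < n) (h0 : (h != 0)%R).
Hypothesis HT : forall c, c %| n -> Tv c = ((n%:R * h)^-1 *
   \sum_(f < n.+1 | (f %| n)%N) Eh n E f * (((c %| n %/ f) * (n %/ f))%N)%:R)%R.
Hypothesis HS : forall b, b %| n -> Sv b = ((n%:R * h)^-1 *
   \sum_(f < n.+1 | (f %| n)%N) Eh n E f * ((gcdn b (n %/ f) * (n %/ f))%N)%:R)%R.
Hypothesis HSS : forall d, d %| n -> Ssv d = ((d%:R * h)^-1 *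
   \sum_(f < n.+1 | (f %| n)%N) Eh n E f * ((gcdn d (n %/ f) ^ 2)%N)%:R)%R.

Lemma main1 d : d %| n ->
  Ssv d = (n%:R * \sum_(c <- divisors n) \sum_(a <- divisors c)
                 (moebius (c %/ a))%:~R * ((gcdn a d)%:R / (lcmn a d)%:R) * Tv c)%R.
Proof.
move=> dn; have d0 := pos_of_dvd n0 dn.
pose gd := fun a => ((gcdn a d)%:R / (lcmn a d)%:R : rat)%R.
rewrite (sum_divisors _ n0 (ltnSn n)).
rewrite (eq_bigr (fun c : 'I_n.+1 => (\sum_(a < n.+1 | (a %| c)%N) (moebius (c %/ a)%N)%:~R * gd a) * Tv c)%R); last first.
  move=> c cn; have c0 := pos_of_dvd n0 cn.
  by rewrite (sum_divisors _ c0 (leq_ltn_trans (dvdn_leq n0 cn) (ltnSn n))) big_distrl.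
transitivity (n%:R * ((n%:R * h)^-1 * \sum_(f < n.+1 | (f %| n)%N) Eh n E f * (((n %/ f)%N)%:R * gd (n %/ f)%N)))%R; last first.
  congr (_ * _)%R; symmetry.
  rewrite (eq_bigr (fun c : 'I_n.+1 => (n%:R * h)^-1 * \sum_(f < n.+1 | (f %| n)%N)
        (Eh n E f * ((((c %| n %/ f) * (n %/ f))%N)%:R *
            \sum_(a < n.+1 | (a %| c)%N) (moebius (c %/ a)%N)%:~R * gd a)))%R); last first.
    move=> c cn; rewrite HT // mulrC -mulrA; congr (_ * _)%R.
    by rewrite mulr_suml; apply: eq_bigr => f _; rewrite mulrA.
  rewrite -mulr_sumr; congr (_ * _)%R; rewrite exchange_big /=; apply: eq_bigr => f fn.
  by rewrite -mulr_sumr inner_T.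
rewrite HSS // mulrA.
rewrite [in RHS](eq_bigr (fun f : 'I_n.+1 => Eh n E f * ((gcdn d (n %/ f) ^ 2)%N)%:R / d%:R)%R); last first.
  move=> f fn; rewrite /gd gd_term ?mulrA //.
  by rewrite divn_gt0 ?(pos_of_dvd n0 fn) // dvdn_leq.
rewrite -mulr_suml.
have nn0 : (n%:R != 0 :> rat)%R by rewrite pnatr_eq0 -lt0n.
have dd0 : (d%:R != 0 :> rat)%R by rewrite pnatr_eq0 -lt0n.
by field; rewrite ?nn0 ?dd0 ?h0.
Qed.

Lemma key c : c %| n ->
  (\sum_(b <- divisors c) (moebius (c %/ b)%N)%:~R * Sv b)%R = ((totient c)%:R * Tv c)%R.
Proof.
move=> cn; have c0 := pos_of_dvd n0 cn.
have cN : c < n.+1 by rewrite ltnS dvdn_leq.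
rewrite (sum_divisors _ c0 cN).
transitivity ((n%:R * h)^-1 * \sum_(f < n.+1 | (f %| n)%N) Eh n E f * (((n %/ f)%N)%:R *
   \sum_(b < n.+1 | (b %| c)%N) (moebius (c %/ b)%N)%:~R * ((gcdn b (n %/ f))%:R : rat)))%R.
  rewrite (eq_bigr (fun b : 'I_n.+1 => (n%:R * h)^-1 * \sum_(f < n.+1 | (f %| n)%N)
        Eh n E f * (((n %/ f)%N)%:R * ((moebius (c %/ b)%N)%:~R * ((gcdn b (n %/ f))%:R : rat))))%R); last first.
    move=> b bc; rewrite HS ?(dvdn_trans bc cn) // mulrCA mulr_sumr; congr (_ * _)%R.
    by apply: eq_bigr => f _; rewrite natrM; ring.
  rewrite -mulr_sumr; congr (_ * _)%R; rewrite exchange_big /=; apply: eq_bigr => f fn.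
  by rewrite -mulr_sumr -mulr_sumr.
rewrite HT // mulrCA; congr (_ * _)%R; rewrite mulr_sumr; apply: eq_bigr => f fn.
have M0 : 0 < n %/ f by rewrite divn_gt0 ?(pos_of_dvd n0 fn) // dvdn_leq.
by rewrite inner_S // !natrM; ring.
Qed.

Lemma main2 d : d %| n ->
  Ssv d = (n%:R * \sum_(c <- divisors n) \sum_(a <- divisors c) \sum_(b <- divisors c)
                 (moebius (c %/ a) * moebius (c %/ b))%:~R / (totient c)%:R
                 * ((gcdn a d)%:R / (lcmn a d)%:R) * Sv b)%R.
Proof.
move=> dn; rewrite main1 //; congr (_ * _)%R.
apply: eq_big_seq => c; rewrite -dvdn_divisors // => cn.
apply: eq_bigr => a _.
have t0 : ((totient c)%:R != 0 :> rat)%R by rewrite pnatr_eq0 -lt0n totient_gt0 (pos_of_dvd n0 cn).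
rewrite (eq_bigr (fun b => ((moebius (c %/ a)%N)%:~R * ((gcdn a d)%:R / (lcmn a d)%:R) / (totient c)%:R)
                            * ((moebius (c %/ b)%N)%:~R * Sv b))%R); last first.
  by move=> b _; rewrite intrM; ring.
by rewrite -big_distrr /= key // [RHS]mulrA divfK.
Qed.

End Main.


Lemma conj_commE (gT : finGroupType) (x y : gT) : ((x ^ y == x) = (x * y == y * x))%g.
Proof. by rewrite conjgE -(inj_eq (mulgI y)) mulKVg. Qed.

Lemma card_setI_sum (T : finType) (A B : {set T}) : #|A :&: B| = (\sum_(x in A) (x \in B))%N.
Proof.
rewrite -sum1_card big_mkcond [RHS]big_mkcond /=; apply: eq_bigr => x _.
by rewrite inE; case: (x \in A); case: (x \in B).
Qed.

Lemma nclasses_count (gT : finGroupType) (L : {group gT}) (A : {set gT}) :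
  A \subset L -> (forall x y, x \in A -> y \in L -> (x ^ y)%g \in A) ->
  nclasses_in L A * #|L| = \sum_(x in A) \sum_(y in L) (x * y == y * x)%g.
Proof.
move=> sAL clA.
have actsA : [acts L, on A | 'J].
  apply/actsP => y yL x /=; apply/idP/idP => [h|]; last by move=> xA; apply: clA.
  by have := clA _ _ h (groupVr yL); rewrite conjgK.
have -> : nclasses_in L A = #|[set orbit 'J L x | x in A]|.
  rewrite /nclasses_in; apply: eq_card => C; rewrite inE.
  apply/andP/imsetP.
    case=> /imsetP[x xL ->] sub; exists x; last by rewrite orbitJ.
    exact: (subsetP sub x (class_refl _ _)).
  case=> x xA ->; rewrite orbitJ; split; first by apply: mem_classes; apply: (subsetP sAL).
  by apply/subsetP => z /imsetP[y yL ->]; apply: clA.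
rewrite -(Frobenius_Cauchy actsA) exchange_big /=; apply: eq_bigr => y yL.
rewrite card_setI_sum; apply: eq_bigr => x xA.
congr (nat_of_bool _); rewrite -conj_commE; apply/idP/idP => [/afix1P -> //|/eqP h]; by apply/afix1P.
Qed.


Section Grp.
Variables (gT : finGroupType) (G H : {group gT}).
Hypothesis nHG : (H <| G)%g.
Variable g0 : coset_of H.
Hypothesis defQ : (G / H)%g = <[g0]>%g.
Local Notation n := #[g0]%g.

Lemma nG : G \subset 'N(H)%g.
Proof. exact: normal_norm. Qed.

Definition FF (i j : nat) : nat := \sum_(x in G) \sum_(y in G)
  [&& coset H x == (g0 ^+ i)%g, coset H y == (g0 ^+ j)%g & (x * y == y * x)%g].

Lemma cosetMG x y : x \in G -> y \in G -> coset H (x * y)%g = (coset H x * coset H y)%g.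
Proof. by move=> xG yG; rewrite morphM // (subsetP nG). Qed.

Lemma sum_mulg (f : gT -> nat) x : x \in G -> \sum_(y in G) f y = \sum_(y in G) f (x * y)%g.
Proof. by move=> xG; rewrite (reindex_inj (mulgI x)) /=; apply: eq_bigl => y; rewrite groupMl. Qed.

Lemma FF_sym i j : FF i j = FF j i.
Proof.
rewrite /FF exchange_big /=; apply: eq_bigr => x _; apply: eq_bigr => y _.
by rewrite andbCA [(y * x == _)%g]eq_sym.
Qed.

Lemma FF_shear i j : FF i j = FF i (i + j).
Proof.
rewrite /FF; apply: eq_bigr => x xG; rewrite [in RHS](sum_mulg _ xG); apply: eq_bigr => y yG.
case: eqP => //= ex; rewrite cosetMG // ex expgD (inj_eq (mulgI _)).
by rewrite -mulgA (inj_eq (mulgI _)).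
Qed.

Lemma FF_n i : FF i n = FF i 0.
Proof. by rewrite /FF expg_order expg0. Qed.

Lemma FF_gcd k i j : i + j <= k -> FF i j = FF (gcdn i j) 0.
Proof.
elim: k i j => [|k IH] i j.
  by rewrite leqn0 addn_eq0 => /andP[/eqP-> /eqP->]; rewrite gcdn0.
move=> hk; case: (posnP i) => [->|i0]; first by rewrite gcd0n FF_sym.
case: (posnP j) => [->|j0]; first by rewrite gcdn0.
case: (leqP i j) => ij.
  rewrite -(subnKC ij) -FF_shear IH ?gcdnDl //; lia.
rewrite FF_sym gcdnC -(subnKC (ltnW ij)) -FF_shear IH ?gcdnDl //; lia.
Qed.

Lemma FF_E i j : FF i j = FF (gcdn (gcdn i j) n) 0.
Proof. by rewrite (FF_gcd (leqnn _)) -FF_n (FF_gcd (leqnn _)). Qed.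

Lemma index_exists x : x \in G -> exists2 i, i < n & coset H x = (g0 ^+ i)%g.
Proof.
move=> xG; have: coset H x \in <[g0]>%g by rewrite -defQ mem_quotient.
by case/cyclePmin => i ilt e; exists i.
Qed.

Lemma index_uniq i j : i < n -> j < n -> ((g0 ^+ i)%g == (g0 ^+ j)%g) = (i == j).
Proof. by move=> ? ?; rewrite eq_expg_mod_order !modn_small. Qed.

Lemma sum_pick (F : nat -> nat) x k : k < n -> coset H x = (g0 ^+ k)%g ->
  \sum_(i < n) (coset H x == (g0 ^+ i)%g) * F i = F k.
Proof.
move=> kn e; rewrite (bigD1 (Ordinal kn)) //= e eqxx mul1n big1 ?addn0 // => i ine.
rewrite index_uniq //; case: eqP => // ki; case/eqP: ine; apply: val_inj => /=; by rewrite ki.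
Qed.

Lemma sum_inG (A : {set gT}) (f : gT -> nat) : A \subset G ->
  \sum_(x in A) f x = \sum_(x in G) (x \in A) * f x.
Proof.
move=> sAG; rewrite big_mkcond [RHS]big_mkcond /=; apply: eq_bigr => x _.
case xA: (x \in A); last by case: (x \in G).
by rewrite (subsetP sAG x xA) mul1n.
Qed.

Lemma pairs_sum (P R : nat -> bool) (A B : {set gT}) :
  A \subset G -> B \subset G ->
  (forall x i, x \in G -> i < n -> coset H x = (g0 ^+ i)%g -> (x \in A) = P i) ->
  (forall x i, x \in G -> i < n -> coset H x = (g0 ^+ i)%g -> (x \in B) = R i) ->
  \sum_(x in A) \sum_(y in B) (x * y == y * x)%g =
  \sum_(i < n) \sum_(j < n) (P i && R j) * FF i j.
Proof.
move=> sAG sBG hA hB.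
rewrite sum_inG //.
under eq_bigr => x _ do rewrite sum_inG // big_distrr /=.
symmetry.
transitivity (\sum_(i < n) \sum_(j < n) \sum_(x in G) \sum_(y in G)
   (P i && R j) * [&& coset H x == (g0 ^+ i)%g, coset H y == (g0 ^+ j)%g & (x * y == y * x)%g]).
  apply: eq_bigr => i _; apply: eq_bigr => j _; rewrite /FF big_distrr /=.
  by apply: eq_bigr => x _; rewrite big_distrr.
transitivity (\sum_(i < n) \sum_(x in G) \sum_(j < n) \sum_(y in G)
   (P i && R j) * [&& coset H x == (g0 ^+ i)%g, coset H y == (g0 ^+ j)%g & (x * y == y * x)%g]).
  by apply: eq_bigr => i _; rewrite exchange_big.
rewrite exchange_big /=; apply: eq_bigr => x xG.
transitivity (\sum_(i < n) \sum_(y in G) \sum_(j < n)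
   (P i && R j) * [&& coset H x == (g0 ^+ i)%g, coset H y == (g0 ^+ j)%g & (x * y == y * x)%g]).
  by apply: eq_bigr => i _; rewrite exchange_big.
rewrite exchange_big /=; apply: eq_bigr => y yG.
have [ix ixn ex] := index_exists xG.
have [iy iyn ey] := index_exists yG.
transitivity (\sum_(i < n) (coset H x == (g0 ^+ i)%g) *
  \sum_(j < n) (coset H y == (g0 ^+ j)%g) * ((P i && R j) * (x * y == y * x)%g)).
  apply: eq_bigr => i _; rewrite big_distrr; apply: eq_bigr => j _.
  rewrite -!mulnb /=; ring.
rewrite (sum_pick (fun i => \sum_(j < n) (coset H y == (g0 ^+ j)%g) * ((P i && R j) * (x * y == y * x)%g)) ixn ex).
rewrite (sum_pick (fun j => (P ix && R j) * (x * y == y * x)%g) iyn ey).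
by rewrite (hA x ix) // (hB y iy) // -!mulnb mulnA.
Qed.

Lemma mem_cycle_pow m i : m %| n -> ((g0 ^+ i)%g \in <[g0 ^+ m]>%g) = (m %| i).
Proof.
move=> mn; apply/idP/idP.
  case/cycleP => t; rewrite -expgM => /eqP; rewrite eq_expg_mod_order => /eqP e.
  by rewrite /dvdn -(modn_dvdm i mn) e modn_dvdm // modnMr.
by case/dvdnP => t ->; rewrite mulnC expgM mem_cycle.
Qed.

Lemma card_cycle_pow m : m %| n -> #|<[g0 ^+ m]>%g| = n %/ m.
Proof. by move=> mn; rewrite -orderE orderXgcd (gcdn_idPr mn). Qed.

Lemma n_gt0 : 0 < n.
Proof. exact: order_gt0. Qed.

Lemma K_char (K : {group gT}) d : (H \subset K)%g -> (K \subset G)%g -> #|K : H|%g = d -> d %| n ->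
  forall x i, x \in G -> i < n -> coset H x = (g0 ^+ i)%g -> (x \in K) = (n %/ d %| i).
Proof.
move=> sHK sKG iKH dn x i xG _ ex.
have sKN : K \subset 'N(H)%g := subset_trans sKG nG.
have d0 : 0 < d by apply: (pos_of_dvd n_gt0 dn) || (case: d dn => //; rewrite dvd0n => /eqP h; have := n_gt0; rewrite h).
have KH : (K / H)%g = <[g0 ^+ (n %/ d)]>%g.
  apply/eqP; rewrite (@eq_subG_cyclic _ (G / H)%G).
  - rewrite card_quotient // iKH card_cycle_pow ?dvdn_div // divnA // mulKn //; exact: n_gt0.
  - by rewrite /= defQ cycle_cyclic.
  - exact: quotientS.
  by rewrite /= defQ cycle_subG mem_cycle.
apply/idP/idP => [xK|].
  by have := mem_quotient H xK; rewrite ex KH mem_cycle_pow // dvdn_div.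
rewrite -mem_cycle_pow ?dvdn_div // -KH -ex => h.
have := mem_morphpre (subsetP nG x xG) h.
by rewrite quotientK // mulSGid.
Qed.

Lemma coset_char (Gam : coset_of H) k : Gam = (g0 ^+ k)%g -> k < n ->
  forall x i, x \in G -> i < n -> coset H x = (g0 ^+ i)%g -> (x \in (Gam : {set gT})) = (i == k).
Proof.
move=> eG kn x i xG iN ex; rewrite -index_uniq // -ex -eG.
apply/idP/eqP => [/coset_mem //|<-].
by rewrite val_coset ?(subsetP nG) // rcoset_refl.
Qed.

Lemma coset_subG (Gam : coset_of H) : Gam \in (G / H)%g -> (Gam : {set gT}) \subset G.
Proof.
case/morphimP => a aN aG -> {Gam}; apply/subsetP => y.
rewrite val_coset // => /rcosetP[h hH ->]; rewrite groupM //.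
exact: (subsetP (normal_sub nHG)).
Qed.

Lemma count_gen (L : {group gT}) (A : {set gT}) (P R : nat -> bool) :
  A \subset L -> L \subset G ->
  (forall x i, x \in G -> i < n -> coset H x = (g0 ^+ i)%g -> (x \in A) = P i) ->
  (forall x i, x \in G -> i < n -> coset H x = (g0 ^+ i)%g -> (x \in L) = R i) ->
  nclasses_in L A * #|L| = \sum_(i < n) \sum_(j < n) (P i && R j) * FF i j.
Proof.
move=> sAL sLG hA hL; have sAG := subset_trans sAL sLG.
rewrite nclasses_count //; first exact: pairs_sum.
move=> x y xA yL.
have xG := subsetP sAG x xA; have yG := subsetP sLG y yL.
have [ix ixn ex] := index_exists xG; have [iy iyn ey] := index_exists yG.
have xyG : (x ^ y)%g \in G by rewrite groupJ.
have exy : coset H (x ^ y)%g = (g0 ^+ ix)%g.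
  rewrite morphJ ?(subsetP nG) // /= ex ey; apply/eqP; rewrite conj_commE.
  by apply/eqP; apply: commuteX2; exact: commute_refl.
by rewrite (hA _ ix) // -(hA x ix).
Qed.

Lemma card_G_eq : #|G| = n * #|H|.
Proof.
by rewrite -(Lagrange (normal_sub nHG)) mulnC -card_quotient ?nG // defQ.
Qed.

Lemma card_K_eq (K : {group gT}) d : (H \subset K)%g -> #|K : H|%g = d -> #|K| = d * #|H|.
Proof. by move=> sHK iKH; rewrite -(Lagrange sHK) mulnC iKH. Qed.

End Grp.


Section Fin.
Variables (gT : finGroupType) (G H : {group gT}).
Hypothesis nHG : (H <| G)%g.
Variable g0 : coset_of H.
Hypothesis defQ : (G / H)%g = <[g0]>%g.
Local Notation n := #[g0]%g.
Local Notation E := (fun e => FF G g0 e 0).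

Lemma count_rat (L : {group gT}) (A : {set gT}) (P R : nat -> bool) :
  A \subset L -> L \subset G ->
  (forall x i, x \in G -> i < n -> coset H x = (g0 ^+ i)%g -> (x \in A) = P i) ->
  (forall x i, x \in G -> i < n -> coset H x = (g0 ^+ i)%g -> (x \in L) = R i) ->
  ((nclasses_in L A)%:R * (#|L|)%:R : rat)%R =
  (\sum_(f < n.+1 | (f %| n)%N) Eh n E f * (\sum_(i < n) (P i && (f %| i)%N))%:R
                                  * (\sum_(j < n) (R j && (f %| j)%N))%:R)%R.
Proof.
move=> sAL sLG hA hL.
rewrite -natrM (count_gen nHG defQ sAL sLG hA hL) -(PS_expand E (n_gt0 g0)).
congr (_%:R)%R; apply: eq_bigr => i _; apply: eq_bigr => j _.
by rewrite (FF_E nHG).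
Qed.

End Fin.

Lemma dvd_k_iff n k c f : 0 < n -> c = n %/ gcdn n k -> f %| n -> (f %| k) = (c %| n %/ f).
Proof.
move=> n0 ce fn.
have gn : gcdn n k %| n := dvdn_gcdl n k.
have g0 : 0 < gcdn n k by rewrite gcdn_gt0 n0.
have c0 : 0 < c by rewrite ce divn_gt0 // dvdn_leq.
have cg : c * gcdn n k = n by rewrite ce divnK.
rewrite dvdn_divRL //.
have -> : (c * f %| n) = (c * f %| c * gcdn n k) by rewrite cg.
rewrite dvdn_pmul2l //.
by rewrite dvdn_gcd fn.
Qed.

Local Open Scope ring_scope.

Theorem theorem6p1 (gT : finGroupType) (G H : {group gT})
    (nHG : (H <| G)%g) (cycGH : cyclic (G / H)%g)
    (K : nat -> {group gT}) (Gamma : nat -> coset_of H) :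
  let n := #|G / H|%g in
  (forall d, (d %| n)%N ->
     [/\ (H \subset K d)%g, (K d \subset G)%g & #|K d : H|%g = d]) ->
  (forall c, (c %| n)%N -> Gamma c \in (G / H)%g /\ #[Gamma c]%g = c) ->
  let T c := (nclasses_in G (set_of_coset (Gamma c)))%:R : rat in
  let S b := (nclasses_in G (K b))%:R : rat in
  let Sstar d := #|classes (K d)|%:R : rat in
  forall d, (d %| n)%N ->
    Sstar d = n%:R * \sum_(c <- divisors n) \sum_(a <- divisors c)
                 (moebius (c %/ a))%:~R * ((gcdn a d)%:R / (lcmn a d)%:R) * T c
 /\ Sstar d = n%:R * \sum_(c <- divisors n) \sum_(a <- divisors c)
                 \sum_(b <- divisors c)
                 (moebius (c %/ a) * moebius (c %/ b))%:~R / (totient c)%:R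
                 * ((gcdn a d)%:R / (lcmn a d)%:R) * S b.
Proof.
move=> n hK hGam T S Sstar d dn.
have [g0 defQ] : exists g0, (G / H)%g = <[g0]>%g by apply/cyclicP.
have nE : n = #[g0]%g by rewrite /n defQ.
have n0 : (0 < #[g0]%g)%N := n_gt0 g0.
pose E := fun e => FF G g0 e 0.
have hH0 : (#|H|%:R != 0 :> rat) by rewrite pnatr_eq0 -lt0n cardG_gt0.
have nh0 : ((#[g0]%g)%:R * #|H|%:R != 0 :> rat) by rewrite mulf_neq0 // pnatr_eq0 -lt0n.
have HT : forall c, (c %| #[g0]%g)%N -> T c = (((#[g0]%g)%:R * #|H|%:R)^-1 *
   \sum_(f < (#[g0]%g).+1 | (f %| #[g0]%g)%N) Eh #[g0]%g E f *
       (((c %| #[g0]%g %/ f) * (#[g0]%g %/ f))%N)%:R).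
  move=> c cn; have [GamQ oGam] : Gamma c \in (G / H)%g /\ #[Gamma c]%g = c by apply: hGam; rewrite nE.
  have : Gamma c \in <[g0]>%g by rewrite -defQ.
  case/cyclePmin => k kn ek.
  have := count_rat nHG defQ (P := fun i => i == k) (R := xpredT) (coset_subG nHG GamQ) (subxx _)
            (coset_char nHG ek kn) (fun x i xG _ _ => xG).
  rewrite (card_G_eq nHG defQ) natrM => e.
  rewrite /T -(mulKf nh0 ((nclasses_in G (set_of_coset (Gamma c)))%:R)) [(_ * (nclasses_in _ _)%:R)]mulrC e; congr (_ * _).
  apply: eq_bigr => f fn; rewrite -mulrA -natrM; congr (_ * _%:R).
  rewrite cnt_eq // -(@dvd_k_iff _ k c _ n0 _ fn); last by rewrite -oGam ek orderXgcd.
  by congr (_ * _)%N; rewrite -(cnt_dvd fn).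
have HS : forall b, (b %| #[g0]%g)%N -> S b = (((#[g0]%g)%:R * #|H|%:R)^-1 *
   \sum_(f < (#[g0]%g).+1 | (f %| #[g0]%g)%N) Eh #[g0]%g E f *
       ((gcdn b (#[g0]%g %/ f) * (#[g0]%g %/ f))%N)%:R).
  move=> b bn; have [sHK sKG iKH] : [/\ (H \subset K b)%g, (K b \subset G)%g & #|K b : H|%g = b].
    by apply: hK; rewrite nE.
  have := count_rat nHG defQ (P := fun i => (#[g0]%g %/ b %| i)%N) (R := xpredT) sKG (subxx _)
            (K_char nHG defQ sHK sKG iKH bn) (fun x i xG _ _ => xG).
  rewrite (card_G_eq nHG defQ) natrM => e.
  rewrite /S -(mulKf nh0 ((nclasses_in G (K b))%:R)) [(_ * (nclasses_in _ _)%:R)]mulrC e; congr (_ * _).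
  apply: eq_bigr => f fn; rewrite -mulrA -natrM; congr (_ * _%:R).
  rewrite cnt_lcm ?dvdn_div // gcd_lcm_id //; congr (_ * _)%N.
  by rewrite -(cnt_dvd fn).
have HSS : forall d, (d %| #[g0]%g)%N -> Sstar d = ((d%:R * #|H|%:R)^-1 *
   \sum_(f < (#[g0]%g).+1 | (f %| #[g0]%g)%N) Eh #[g0]%g E f *
       ((gcdn d (#[g0]%g %/ f) ^ 2)%N)%:R).
  move=> d' dn'; have [sHK sKG iKH] : [/\ (H \subset K d')%g, (K d' \subset G)%g & #|K d' : H|%g = d'].
    by apply: hK; rewrite nE.
  have dh0 : (d'%:R * #|H|%:R != 0 :> rat).
    by rewrite mulf_neq0 // pnatr_eq0 -lt0n (pos_of_dvd n0 dn').
  have := count_rat nHG defQ (P := fun i => (#[g0]%g %/ d' %| i)%N) (R := fun i => (#[g0]%g %/ d' %| i)%N)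
            (subxx _) sKG (K_char nHG defQ sHK sKG iKH dn') (K_char nHG defQ sHK sKG iKH dn').
  rewrite (card_K_eq sHK iKH) natrM => e.
  have -> : Sstar d' = (nclasses_in (K d') (K d'))%:R.
    rewrite /Sstar /nclasses_in; congr (_%:R); apply: eq_card => C; rewrite inE.
    case CK: (C \in classes (K d')); rewrite //=; move: CK => /imsetP[x xK ->].
    by rewrite class_subG.
  rewrite -(mulKf dh0 ((nclasses_in (K d') (K d'))%:R)) [(_ * (nclasses_in _ _)%:R)]mulrC e; congr (_ * _).
  apply: eq_bigr => f fn; rewrite -mulrA -natrM; congr (_ * _%:R).
  by rewrite cnt_lcm ?dvdn_div // gcd_lcm_id // expnS expn1.
rewrite nE in dn *; split.
  exact: (main1 n0 hH0 HT HSS dn).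
exact: (main2 n0 hH0 HT HS HSS dn).
Qed.
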